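(* Let $G(z)=\sum_{n\ge0}a_n^2z^n$ with $a_n\ge0$ (infinitely many non-zero) have radius of convergence $R_G$, and put $t_G=\log R_G$, $H(z)=G(e^z)$, $B(t)=(\log H)''(t)$. Then for all $t<t_G$ and $\theta\in[-\pi,\pi]$ for which the denominator below is non-zero, \[ \frac{|H(t)H'(t+i\theta)-H(t+i\theta)H'(t)|^2}{H^2(t)\left(H^2(t)-|H(t+i\theta)|^2\right)}\le B(t). \] *)

(* Defs.v *)
From Stdlib Require Import Reals.
From Coquelicot Require Import Coquelicot.
Open Scope R_scope.

Definition Cexp (z : C) : C :=
  (exp (fst z) * cos (snd z), exp (fst z) * sin (snd z)).

(* G(w) = sum_n a_n^2 w^n, as a total function C -> C (real and imaginary
   parts summed separately with Coquelicot's Series; this agrees with the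
   power series inside its disc of convergence). *)
Definition Gfun (a : nat -> R) (w : C) : C :=
  (Series (fun n => a n ^ 2 * fst (Cpow w n)),
   Series (fun n => a n ^ 2 * snd (Cpow w n))).

Definition RG (a : nat -> R) : Rbar := CV_radius (fun n => a n ^ 2).

Definition Hfun (a : nat -> R) (z : C) : C := Gfun a (Cexp z).

Definition Bfun (a : nat -> R) (t : R) : R :=
  Derive_n (fun s => ln (fst (Hfun a (RtoC s)))) 2 t.

Definition is_Hderiv (a : nat -> R) (z d : C) : Prop :=
  @is_derive C_AbsRing C_NormedModule (Hfun a) z d.

(* Main.v *)
Require Import Defs.
From Stdlib Require Import Reals Lra Lia.
From Coquelicot Require Import Coquelicot.
Open Scope R_scope.

Lemma deriv_dir (f : C -> C) s0 th d : @is_derive C_AbsRing C_NormedModule f (s0,th) d -> is_derive (fun s => fst (f (s,th))) s0 (fst d) /\ is_derive (fun s => snd (f (s,th))) s0 (snd d).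
Proof.
intros [_ Hd].
assert (EQ : forall y, ((y, th) + - (s0, th))%C = RtoC (y - s0)).
{ intros y. unfold Cplus, Copp, RtoC; simpl. f_equal; ring. }
split; (split; [apply is_linear_scal_l|]);
intros x Hx; assert (E : s0 = x) by (apply (@is_filter_lim_locally_unique _ R_NormedModule); exact Hx); subst x;
intros eps;
specialize (Hd (s0,th) (fun P HP => HP) eps);
destruct Hd as [del Hdel];
exists del; intros y Hy;
specialize (Hdel (y,th));
(assert (B : @ball (AbsRing_UniformSpace C_AbsRing) (s0,th) del (y,th)) by
 (unfold ball; simpl; unfold AbsRing_ball; simpl; unfold abs, minus, plus, opp; simpl;
 rewrite EQ, Cmod_R; exact Hy));
specialize (Hdel B);
unfold norm, minus, plus, opp, scal in *; simpl in *;
rewrite EQ, Cmod_R in Hdel; unfold abs; simpl;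
refine (Rle_trans _ _ _ _ Hdel).
- pose proof (re_le_Cmod (f (y, th) + - f (s0, th) + - mult (RtoC (y - s0)) d)%C) as H.
  unfold Re in H. simpl in H. unfold mult; simpl. replace (y + - s0) with (y - s0) by ring.
  refine (Rle_trans _ _ _ _ H). right. f_equal. ring.
- pose proof (Rmax_Cmod (f (y, th) + - f (s0, th) + - mult (RtoC (y - s0)) d)%C) as H0.
  pose proof (Rle_trans _ _ _ (Rmax_r _ _) H0) as H.
  simpl in H. unfold mult; simpl. replace (y + - s0) with (y - s0) by ring.
  refine (Rle_trans _ _ _ _ H). right. f_equal. ring.
Qed.

Lemma CV_mono (a b : nat -> R) : (forall n, Rabs (b n) <= Rabs (a n)) ->
  Rbar_le (CV_radius a) (CV_radius b).
Proof.
intros Hab. unfold CV_radius.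
destruct (Lub_Rbar_correct (CV_disk a)) as [_ Ha].
destruct (Lub_Rbar_correct (CV_disk b)) as [Hb _].
apply Ha. intros r Hr. apply Hb. unfold CV_disk in *.
apply (@ex_series_le R_AbsRing R_CompleteNormedModule _ (fun n => Rabs (a n * r ^ n))); [|exact Hr].
intros n. unfold norm; simpl. unfold abs; simpl. rewrite Rabs_Rabsolu, !Rabs_mult.
apply Rmult_le_compat_r. apply Rabs_pos. apply Hab.
Qed.

Definition Dd (b : nat -> R) (n : nat) := INR n * b n.

Lemma Dd_incr (b : nat -> R) n : PS_incr_1 (PS_derive b) n = Dd b n.
Proof. destruct n; unfold Dd; simpl. unfold zero; simpl; ring. unfold PS_derive. reflexivity. Qed.

Lemma Dd_radius b : CV_radius (Dd b) = CV_radius b.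
Proof.
rewrite <- (CV_radius_ext _ _ (Dd_incr b)). rewrite CV_radius_incr_1. apply CV_radius_derive.
Qed.

Lemma deriv_exp b s : Rbar_lt (exp s) (CV_radius b) ->
  is_derive (fun u => PSeries b (exp u)) s (PSeries (Dd b) (exp s)).
Proof.
intros H.
assert (H1 : is_derive (PSeries b) (exp s) (PSeries (PS_derive b) (exp s))).
{ apply is_derive_PSeries. rewrite Rabs_pos_eq. exact H. left; apply exp_pos. }
pose proof (is_derive_comp (PSeries b) exp s _ _ H1 (is_derive_exp s)) as H2.
replace (PSeries (Dd b) (exp s)) with (scal (exp s) (PSeries (PS_derive b) (exp s))). exact H2.
rewrite <- (PSeries_ext _ _ _ (Dd_incr b)). rewrite PSeries_incr_1. reflexivity.
Qed.

Lemma Cpow_polar r th n : Cpow (r * cos th, r * sin th) n = (r ^ n * cos (INR n * th), r ^ n * sin (INR n * th)).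
Proof.
induction n.
- simpl. rewrite Rmult_0_l, cos_0, sin_0. unfold RtoC. f_equal; ring.
- simpl Cpow. rewrite IHn. rewrite S_INR.
  replace ((INR n + 1) * th) with (th + INR n * th) by ring.
  rewrite cos_plus, sin_plus. unfold Cmult; simpl. f_equal; ring.
Qed.

Definition cc (a : nat -> R) th n := a n ^ 2 * cos (INR n * th).
Definition ss (a : nat -> R) th n := a n ^ 2 * sin (INR n * th).

Lemma Hfun_eq a s th : Hfun a (s, th) = (PSeries (cc a th) (exp s), PSeries (ss a th) (exp s)).
Proof.
unfold Hfun, Gfun, Cexp. simpl. unfold PSeries. f_equal; apply Series_ext; intros n;
rewrite Cpow_polar; simpl; unfold cc, ss; ring.
Qed.

Lemma series_nonneg (u : nat -> R) l : (forall n, 0 <= u n) -> is_series u l -> 0 <= l.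
Proof.
intros Hu Hs. rewrite <- (is_series_unique _ _ Hs).
replace 0 with (Series (fun n => 0 * u n)).
apply Series_le. intros n; split; [right; ring| rewrite Rmult_0_l; apply Hu]. exists l; exact Hs.
rewrite Series_scal_l. ring.
Qed.

Lemma sum_ge_term (u : nat -> R) m : (forall n, 0 <= u n) -> u m <= sum_f_R0 u m /\ 0 <= sum_f_R0 u m.
Proof.
intros Hu. induction m; simpl. split; [right; reflexivity| apply Hu].
destruct IHm as [_ H2]. split. pose proof (Hu (S m)); lra. pose proof (Hu (S m)); lra.
Qed.

Lemma series_pos_term (u : nat -> R) m : (forall n, 0 <= u n) -> ex_series u -> u m <= Series u.
Proof.
intros Hu Hs. rewrite (Series_incr_n u (S m)); [| lia | exact Hs]. simpl pred.
destruct (sum_ge_term u m Hu) as [H1 _].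
assert (0 <= Series (fun k => u (S m + k)%nat)).
{ destruct (proj1 (ex_series_incr_n u (S m)) Hs) as [l Hl].
  rewrite (is_series_unique _ _ Hl). apply (series_nonneg _ _ (fun n => Hu _) Hl). }
lra.
Qed.

Lemma PS0 x : PSeries (fun _ => 0) x = 0.
Proof.
unfold PSeries.
rewrite Series_scal_l. ring.
Qed.

Lemma open_rad (r : Rbar) t : Rbar_lt (exp t) r ->
  exists eps : posreal, forall s, Rabs (s - t) < eps -> Rbar_lt (exp s) r.
Proof.
destruct r as [r| |]; simpl; intros H.
- assert (Hr : 0 < r) by (pose proof (exp_pos t); lra).
  assert (Ht : t < ln r) by (rewrite <- (ln_exp t); apply ln_increasing; [apply exp_pos|exact H]).
  exists (mkposreal (ln r - t) ltac:(lra)). simpl. intros s Hs.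
  rewrite <- (exp_ln r Hr). apply exp_increasing. apply Rabs_def2 in Hs. lra.
- exists (mkposreal 1 Rlt_0_1). intros; exact I.
- destruct H.
Qed.

Lemma cc_radius a th : Rbar_le (CV_radius (fun n => a n ^ 2)) (CV_radius (cc a th)).
Proof. apply CV_mono. intros n. unfold cc. rewrite Rabs_mult. pose proof (Rabs_pos (a n ^2)).
 pose proof (COS_bound (INR n * th)). assert (Rabs (cos (INR n * th)) <= 1) by (apply Rabs_le; lra). nra. Qed.

Lemma ss_radius a th : Rbar_le (CV_radius (fun n => a n ^ 2)) (CV_radius (ss a th)).
Proof. apply CV_mono. intros n. unfold ss. rewrite Rabs_mult. pose proof (Rabs_pos (a n ^2)).
 pose proof (SIN_bound (INR n * th)). assert (Rabs (sin (INR n * th)) <= 1) by (apply Rabs_le; lra). nra. Qed.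

Lemma cc0 a n : cc a 0 n = a n ^ 2.
Proof. unfold cc. rewrite Rmult_0_r, cos_0. ring. Qed.
Lemma ss0 a n : ss a 0 n = 0.
Proof. unfold ss. rewrite Rmult_0_r, sin_0. ring. Qed.

Lemma Cmod_sq z : Cmod z ^ 2 = fst z ^ 2 + snd z ^ 2.
Proof. unfold Cmod. rewrite pow2_sqrt. reflexivity. pose proof (pow2_ge_0 (fst z)); pose proof (pow2_ge_0 (snd z)); lra. Qed.

Lemma ps_is (b : nat -> R) x : Rbar_lt (Rabs x) (CV_radius b) -> is_series (fun n => b n * x ^ n) (PSeries b x).
Proof. intros H. apply is_pseries_R. apply PSeries_correct. apply CV_radius_inside. exact H. Qed.

Lemma is_series_lin (u v : nat -> R) lu lv k1 k2 : is_series u lu -> is_series v lv ->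
  is_series (fun n => k1 * u n + k2 * v n) (k1 * lu + k2 * lv).
Proof.
intros Hu Hv. apply (is_series_plus (fun n => k1 * u n) (fun n => k2 * v n)).
exact (@is_series_scal R_AbsRing R_NormedModule k1 u lu Hu).
exact (@is_series_scal R_AbsRing R_NormedModule k2 v lv Hv).
Qed.

Lemma quad_final S K A B D : 0 < S -> 0 < D ->
  (forall p q r, 0 <= (p^2+q^2)*K - 2*r*(p*A+q*B) + r^2*D) ->
  (A^2+B^2)/(S^2*D) <= K/S^2.
Proof.
intros HS HD HQ.
assert (HK : 0 <= K) by (specialize (HQ 1 0 0); lra).
assert (HE : A^2+B^2 <= K*D).
{ destruct (Rle_lt_or_eq_dec _ _ HK) as [Kp|K0].
  - specialize (HQ A B K).
    assert (0 <= K*(K*D - (A^2+B^2))) by nra. 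
    apply Rmult_le_reg_l with K; [exact Kp|]. nra.
  - subst K. destruct (Req_dec (A^2+B^2) 0) as [E0|E0]. rewrite E0; lra.
    assert (Ep : 0 < A^2+B^2) by (pose proof (pow2_ge_0 A); pose proof (pow2_ge_0 B); lra).
    set (l := (D+1)/(2*(A^2+B^2))).
    specialize (HQ (l*A) (l*B) 1).
    assert (El : l * (2*(A^2+B^2)) = D+1) by (unfold l; field; lra).
    exfalso. nra. }
assert (HS2 : 0 < S^2) by nra.
apply Rle_trans with ((K*D)/(S^2*D)).
- unfold Rdiv. apply Rmult_le_compat_r; [|exact HE]. left; apply Rinv_0_lt_compat; nra.
- right. field. lra.
Qed.

Lemma key a (th x S M1 M2 X Y U V p q r : R) :
  0 <= x ->
  is_series (fun n => a n ^ 2 * x ^ n) S ->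
  is_series (fun n => Dd (fun n => a n ^ 2) n * x ^ n) M1 ->
  is_series (fun n => Dd (Dd (fun n => a n ^ 2)) n * x ^ n) M2 ->
  is_series (fun n => cc a th n * x ^ n) X ->
  is_series (fun n => ss a th n * x ^ n) Y ->
  is_series (fun n => Dd (cc a th) n * x ^ n) U ->
  is_series (fun n => Dd (ss a th) n * x ^ n) V ->
  0 <= S * ((p^2+q^2)*(S*M2 - M1^2) - 2*r*(p*(S*U - X*M1) + q*(S*V - Y*M1)) + r^2*(S^2 - X^2 - Y^2)).
Proof.
intros Hx H0 H1 H2 H3 H4 H5 H6.
pose proof (is_series_lin _ _ _ _ (-2*q*r*S^2) (2*q*r*M1*S - 2*r^2*S*Y) H6 H4) as G.
pose proof (is_series_lin _ _ _ _ (2*p*r*M1*S - 2*r^2*S*X) 1 H3 G) as G1.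
pose proof (is_series_lin _ _ _ _ (-2*p*r*S^2) 1 H5 G1) as G2.
pose proof (is_series_lin _ _ _ _ ((p^2+q^2)*M1^2 - 2*p*r*M1*X - 2*q*r*M1*Y + r^2*(S^2+X^2+Y^2)) 1 H0 G2) as G3.
pose proof (is_series_lin _ _ _ _ (-2*(p^2+q^2)*S*M1 + 2*p*r*S*X + 2*q*r*S*Y) 1 H1 G3) as G4.
pose proof (is_series_lin _ _ _ _ ((p^2+q^2)*S^2) 1 H2 G4) as G5.
apply series_nonneg in G5.
- match type of G5 with 0 <= ?v => replace (S * _) with v by ring end. exact G5.
- intros n. cbv beta. unfold Dd, cc, ss.
  set (co := cos (INR n * th)). set (si := sin (INR n * th)). set (xn := x ^ n). assert (Hxn : 0 <= xn) by (apply pow_le; exact Hx).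
  assert (E : si^2 + co^2 = 1) by (unfold si, co; rewrite <- !Rsqr_pow2; apply sin2_cos2).
  match goal with |- 0 <= ?v => replace v with
    ((a n ^ 2 * xn) * ((p*(S*INR n - M1) - r*(S*co - X))^2 + (q*(S*INR n - M1) - r*(S*si - Y))^2)
     - (a n ^ 2 * xn) * r^2 * S^2 * (si^2+co^2 - 1)) end.
  + rewrite E. replace (1 - 1) with 0 by ring. rewrite Rmult_0_r, Rminus_0_r.
    apply Rmult_le_pos. apply Rmult_le_pos. apply pow2_ge_0. exact Hxn.
    apply Rplus_le_le_0_compat; apply pow2_ge_0.
  + ring.
Qed.

Lemma rad_le a th s : Rbar_lt (exp s) (CV_radius (fun n => a n ^ 2)) ->
  Rbar_lt (exp s) (CV_radius (cc a th)) /\ Rbar_lt (exp s) (CV_radius (ss a th)).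
Proof.
intros H. split; eapply Rbar_lt_le_trans; [exact H| apply cc_radius | exact H | apply ss_radius].
Qed.

Lemma P0pos a (ha_nonneg : forall n, 0 <= a n) (ha_inf : forall N : nat, exists n, (N <= n)%nat /\ a n <> 0) s :
  Rbar_lt (exp s) (CV_radius (fun n => a n ^ 2)) -> 0 < PSeries (fun n => a n ^ 2) (exp s).
Proof.
intros H. destruct (ha_inf 0%nat) as [m [_ Hm]].
assert (Hs : is_series (fun n => a n ^ 2 * exp s ^ n) (PSeries (fun n => a n ^ 2) (exp s))).
{ apply ps_is. rewrite Rabs_pos_eq; [exact H| left; apply exp_pos]. }
unfold PSeries.
eapply Rlt_le_trans; [| apply (series_pos_term _ m)].
- apply Rmult_lt_0_compat. apply pow_lt. destruct (ha_nonneg m); [lra| congruence].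
  apply pow_lt, exp_pos.
- intros n. apply Rmult_le_pos. apply pow2_ge_0. apply pow_le. left; apply exp_pos.
- exists (PSeries (fun n => a n ^ 2) (exp s)). exact Hs.
Qed.

Theorem corollary5p3 (a : nat -> R)
  (ha_nonneg : forall n, 0 <= a n)
  (ha_inf : forall N : nat, exists n, (N <= n)%nat /\ a n <> 0)
  (t theta : R)
  (ht : Rbar_lt (Finite (exp t)) (RG a))   (* t < t_G = log R_G *)
  (hth : - PI <= theta <= PI)
  (dt dz : C)
  (hdt : is_Hderiv a (RtoC t) dt)                 (* dt = H'(t) *)
  (hdz : is_Hderiv a (t, theta) dz)               (* dz = H'(t + i theta) *)
  (hden : (fst (Hfun a (RtoC t))) ^ 2 *
          ((fst (Hfun a (RtoC t))) ^ 2 - (Cmod (Hfun a (t, theta))) ^ 2) <> 0) :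
  (Cmod (Cminus (Cmult (Hfun a (RtoC t)) dz) (Cmult (Hfun a (t, theta)) dt))) ^ 2
  / ((fst (Hfun a (RtoC t))) ^ 2 *
     ((fst (Hfun a (RtoC t))) ^ 2 - (Cmod (Hfun a (t, theta))) ^ 2))
  <= Bfun a t.
Proof.
set (c := fun n => a n ^ 2).
unfold RG in ht. fold c in ht.
set (x := exp t).
assert (Hx : Rabs x = x) by (apply Rabs_pos_eq; left; apply exp_pos).
assert (Hc : Rbar_lt (Rabs x) (CV_radius c)) by (rewrite Hx; exact ht).
destruct (rad_le a theta t ht) as [Hcc Hss].
destruct (rad_le a 0 t ht) as [Hcc0 Hss0].
assert (Edz : fst dz = PSeries (Dd (cc a theta)) x /\ snd dz = PSeries (Dd (ss a theta)) x).
{ destruct (deriv_dir _ _ _ _ hdz) as [Hz1 Hz2]. split.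
  - rewrite <- (is_derive_unique _ _ _ Hz1). apply is_derive_unique.
    eapply is_derive_ext; [| apply (deriv_exp _ t Hcc)].
    intros s. rewrite Hfun_eq. reflexivity.
  - rewrite <- (is_derive_unique _ _ _ Hz2). apply is_derive_unique.
    eapply is_derive_ext; [| apply (deriv_exp _ t Hss)].
    intros s. rewrite Hfun_eq. reflexivity. }
assert (Edt : fst dt = PSeries (Dd c) x /\ snd dt = 0).
{ change (RtoC t) with (t, 0) in hdt.
  destruct (deriv_dir _ _ _ _ hdt) as [Hz1 Hz2]. split.
  - rewrite <- (is_derive_unique _ _ _ Hz1). rewrite (PSeries_ext (Dd c) (Dd (cc a 0))).
    apply is_derive_unique.
    eapply is_derive_ext; [| apply (deriv_exp _ t Hcc0)].
    intros s. rewrite Hfun_eq. reflexivity.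
    intros n; unfold Dd; rewrite cc0; reflexivity.
  - rewrite <- (is_derive_unique _ _ _ Hz2).
    rewrite (is_derive_unique (fun s => snd (Hfun a (s, 0))) t (PSeries (Dd (ss a 0)) x)).
    rewrite (PSeries_ext (Dd (ss a 0)) (fun _ => 0)). apply PS0. intros n; unfold Dd; rewrite ss0; ring.
    eapply is_derive_ext; [| apply (deriv_exp _ t Hss0)].
    intros s. rewrite Hfun_eq. reflexivity. }
assert (EH0 : Hfun a (RtoC t) = (PSeries c x, 0)).
{ change (RtoC t) with (t, 0). rewrite Hfun_eq. f_equal.
  apply PSeries_ext. intros n; rewrite cc0; reflexivity.
  rewrite (PSeries_ext (ss a 0) (fun _ => 0)). apply PS0. intros n; rewrite ss0; reflexivity. }
rewrite EH0. rewrite Hfun_eq. fold x.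
assert (EB : Bfun a t = (PSeries (Dd (Dd c)) x * PSeries c x - PSeries (Dd c) x * PSeries (Dd c) x) / (PSeries c x) ^ 2).
{ unfold Bfun.
  assert (Hf : forall s, ln (fst (Hfun a (RtoC s))) = ln (PSeries c (exp s))).
  { intros s. change (RtoC s) with (s, 0). rewrite Hfun_eq. cbn [fst]. f_equal. apply PSeries_ext. intros n; rewrite cc0; reflexivity. }
  change (Derive_n (fun s => ln (fst (Hfun a (RtoC s)))) 2 t) with (Derive (fun y => Derive (fun s => ln (fst (Hfun a (RtoC s)))) y) t).
  rewrite (Derive_ext (fun y => Derive (fun s => ln (fst (Hfun a (RtoC s)))) y) (fun y => Derive (fun s => ln (PSeries c (exp s))) y)) by (intros y; apply Derive_ext; exact Hf).
  destruct (open_rad _ t ht) as [eps Heps].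
  rewrite (Derive_ext_loc _ (fun y => PSeries (Dd c) (exp y) / PSeries c (exp y))).
  2: { exists eps. intros y Hy.
       assert (Hy' : Rbar_lt (exp y) (CV_radius c)) by (apply Heps; exact Hy).
       apply is_derive_unique.
       exact (is_derive_comp ln (fun u => PSeries c (exp u)) y _ _ (is_derive_ln _ (P0pos a ha_nonneg ha_inf y Hy')) (deriv_exp c y Hy')). }
  apply is_derive_unique.
  assert (H1 : Rbar_lt (exp t) (CV_radius (Dd c))) by (rewrite Dd_radius; exact ht).
  exact (is_derive_div _ _ t _ _ (deriv_exp (Dd c) t H1) (deriv_exp c t ht) (Rgt_not_eq _ _ (P0pos a ha_nonneg ha_inf t ht))). }
rewrite EB.
destruct Edz as [Ez1 Ez2]. destruct Edt as [Et1 Et2].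
destruct dz as [dz1 dz2]. destruct dt as [dt1 dt2]. simpl in Ez1, Ez2, Et1, Et2.
subst dz1 dz2 dt1 dt2.
rewrite EH0, Hfun_eq in hden. fold x in hden. cbn [fst] in hden.
set (S := PSeries c x) in *.
set (M1 := PSeries (Dd c) x) in *.
set (M2 := PSeries (Dd (Dd c)) x) in *.
set (X := PSeries (cc a theta) x) in *.
set (Y := PSeries (ss a theta) x) in *.
set (U := PSeries (Dd (cc a theta)) x) in *.
set (V := PSeries (Dd (ss a theta)) x) in *.
rewrite !Cmod_sq in *. cbn [fst snd] in *.
assert (HS : 0 < S) by (apply P0pos; auto).
assert (HQ : forall p q r, 0 <= S * ((p^2+q^2)*(S*M2 - M1^2) - 2*r*(p*(S*U - X*M1) + q*(S*V - Y*M1)) + r^2*(S^2 - X^2 - Y^2))).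
{ intros p q r. apply (key a theta x).
  - left; apply exp_pos.
  - apply ps_is; exact Hc.
  - apply ps_is; rewrite Dd_radius; exact Hc.
  - apply ps_is; rewrite !Dd_radius; exact Hc.
  - apply ps_is; rewrite Hx; exact Hcc.
  - apply ps_is; rewrite Hx; exact Hss.
  - apply ps_is; rewrite Dd_radius, Hx; exact Hcc.
  - apply ps_is; rewrite Dd_radius, Hx; exact Hss. }
assert (HQ' : forall p q r, 0 <= (p^2+q^2)*(S*M2 - M1^2) - 2*r*(p*(S*U - X*M1) + q*(S*V - Y*M1)) + r^2*(S^2 - X^2 - Y^2)).
{ intros p q r. specialize (HQ p q r). apply Rmult_le_reg_l with S; [exact HS|]. lra. }
assert (HD : 0 < S^2 - X^2 - Y^2).
{ specialize (HQ' 0 0 1). destruct (Rle_lt_or_eq_dec 0 (S^2 - X^2 - Y^2)); [lra| |].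
  exact r. exfalso; apply hden; match goal with |- ?u * ?v = 0 => replace v with 0 by lra; ring end. }
pose proof (quad_final S (S*M2 - M1^2) (S*U - X*M1) (S*V - Y*M1) (S^2 - X^2 - Y^2) HS HD HQ') as F.
unfold Cminus, Cplus, Copp, Cmult; cbn [fst snd].
match goal with |- ?l <= ?r => replace l with ((((S*U - X*M1)^2 + (S*V - Y*M1)^2)/(S^2*(S^2 - X^2 - Y^2)))) by (unfold Rdiv; f_equal; [ring| f_equal; ring]);
  replace r with ((S*M2 - M1^2)/S^2) by (unfold Rdiv; f_equal; ring) end.
exact F.
Qed.
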